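(* Let $t\geq 2$ be an integer, $m=4t+2$ and $n=2^m+1$, and let $x$ be an odd integer. Then: (1) if $1\leq x\leq 2^{2t+1}-1$, $x$ is a coset leader; (2) if $2^{2t+1}+3\leq x\leq 2^{2t+2}-5$, $x$ is a coset leader; (3) if $2^{2t+2}+5\leq x\leq 2^{2t+2}+2^{2t}-3$, $x$ is a coset leader; (4) if $2^{2t+2}+2^{2t}+3\leq x\leq 2^{2t+2}+2^{2t+1}-3$, $x$ is a coset leader; (5) if $x=2^{2t+1}+1$, or $2^{2t+2}-3\leq x\leq 2^{2t+2}+3$, or $2^{2t+2}+2^{2t}-1\leq x\leq 2^{2t+2}+2^{2t}+1$, or $2^{2t+2}+2^{2t+1}-1\leq x\leq 2^{2t+2}+2^{2t+1}+3$, then $x$ is not a coset leader.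
   Context: For $n=2^m+1$ and an integer $x$, the 2-cyclotomic coset of $x$ modulo $n$ is $C_x=\{x\cdot 2^{j} \bmod n : j\geq 0\}\subseteq\{0,1,\dots,n-1\}$. For $0\leq x\leq n-1$, ''$x$ is a coset leader'' means that $x$ is the smallest element of $C_x$. *)

(* Defs.v *)
From mathcomp Require Import all_boot.

Definition cyc_coset (n x : nat) : nat -> Prop :=
  fun y => exists j : nat, y = (x * 2 ^ j) %% n.

Definition coset_leader (n x : nat) : Prop :=
  x < n /\ cyc_coset n x x /\ (forall y, cyc_coset n x y -> x <= y).

(* Main.v *)
Require Import Defs.
From mathcomp Require Import all_boot zify.

Lemma modE y a n E : y = a * n + E -> E < n -> y %% n = E.
Proof. by move=> -> hE; rewrite modnMDl modn_small. Qed.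

Lemma negmod r n : 0 < r -> r < n -> (r * n.-1) %% n = n - r.
Proof. move=> h1 h2; apply: (modE _ r.-1); nia. Qed.

Lemma leader_crit m x : 0 < m -> 0 < x -> x < 2 ^ m + 1 ->
  (forall j, j < m -> x <= x * 2 ^ j %% (2 ^ m + 1) /\ x * 2 ^ j %% (2 ^ m + 1) + x <= 2 ^ m + 1) ->
  coset_leader (2 ^ m + 1) x.
Proof.
set n := 2 ^ m + 1 => m0 x0 xn H.
have key : forall J, x <= x * 2 ^ J %% n /\ x * 2 ^ J %% n + x <= n.
  elim/ltn_ind => J IH; case: (ltnP J m) => hJ; first exact: H.
  have -> : J = (J - m) + m by rewrite subnK.
  rewrite expnD mulnA -modnMml.
  have [h1 h2] := IH (J - m) ltac:(lia).
  have -> : 2 ^ m = n.-1 by rewrite /n addn1.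
  have hlt : x * 2 ^ (J - m) %% n < n by rewrite ltn_pmod // /n addn1.
  rewrite negmod; lia.
split; first done; split.
  by exists 0; rewrite expn0 muln1 modn_small.
by move=> y [j ->]; exact: (key j).1.
Qed.

Lemma not_leader n x J : x * 2 ^ J %% n < x -> ~ coset_leader n x.
Proof. move=> h [_ [_ hmin]]; have := hmin _ (ex_intro _ J erefl); lia. Qed.

Lemma shiftm m x j : 0 < x * 2 ^ j %% (2 ^ m + 1) ->
  x * 2 ^ (j + m) %% (2 ^ m + 1) = (2 ^ m + 1) - x * 2 ^ j %% (2 ^ m + 1).
Proof.
set n := 2 ^ m + 1 => h; rewrite expnD mulnA -modnMml.
have -> : 2 ^ m = n.-1 by rewrite /n addn1.
rewrite negmod // ltn_pmod // /n addn1 //.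
Qed.

Lemma mid x P n a E : x * P = a * n + E -> E < n -> x <= E -> E + x <= n ->
  x <= x * P %% n /\ x * P %% n + x <= n.
Proof. by move=> h1 h2 h3 h4; rewrite (modE _ _ _ _ h1 h2). Qed.

Lemma small_case t H x j : H = 2 ^ (2 * t) -> 16 <= H -> j < 2 * t -> 1 <= x <= 6 * H ->
  x <= x * 2 ^ j %% (4 * (H * H) + 1) /\ x * 2 ^ j %% (4 * (H * H) + 1) + x <= 4 * (H * H) + 1.
Proof.
move=> eH H16 hj hx.
have P2 : 2 ^ j * 2 <= H by rewrite eH -expnSr leq_exp2l.
have P1 : 0 < 2 ^ j by rewrite expn_gt0.
move: P1 P2; set P := 2 ^ j => P1 P2.
have a1 : x * (P * 2) <= (6 * H) * H by apply: leq_mul; lia.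
have a2 : 16 * H <= H * H by apply: leq_mul.
have a3 : x <= x * P by rewrite leq_pmulr.
apply: (mid _ _ _ 0 (x * P)); rewrite ?mul0n ?add0n //; lia.
Qed.

Lemma big_case t H x j : H = 2 ^ (2 * t) -> 16 <= H -> 2 * t + 3 <= j < 4 * t + 2 ->
  odd x -> 1 <= x <= 6 * H ->
  x <= x * 2 ^ j %% (4 * (H * H) + 1) /\ x * 2 ^ j %% (4 * (H * H) + 1) + x <= 4 * (H * H) + 1.
Proof.
move=> eH H16 /andP[hj1 hj2] ox hx.
have PQ : 2 ^ j * 2 ^ (4 * t + 2 - j) = 4 * (H * H).
  rewrite -expnD subnKC; last lia.
  by rewrite eH -expnD (_ : 4 * t + 2 = 2 + (2 * t + 2 * t)) ?expnD //; lia.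
have P8 : 8 * H <= 2 ^ j.
  by rewrite eH (_ : 8 = 2 ^ 3) // -expnD leq_exp2l //; lia.
have oQ : odd (2 ^ (4 * t + 2 - j)) = false by rewrite oddX; apply/negbTE; lia.
have Q2 : 0 < 2 ^ (4 * t + 2 - j) by rewrite expn_gt0.
move: PQ P8 oQ Q2; set P := 2 ^ j; set Q := 2 ^ _ => PQ P8 oQ Q2.
have ex := divn_eq x Q.
have lQ : x %% Q < Q by rewrite ltn_pmod.
move: ex lQ; set h := x %/ Q; set l := x %% Q => ex lQ.
have ol : odd l by move: ox; rewrite ex oddD oddM oQ andbF.
have l1 : 1 <= l by case: (l) ol.
have hQ : 2 * Q <= H.
  have : (8 * H) * Q <= P * Q by apply: leq_mul.
  rewrite PQ => h'.
  have : H * (2 * Q) <= H * H by lia.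
  by rewrite leq_pmul2l //; lia.
have b1 : (2 * Q) * x <= H * (6 * H) by apply: leq_mul; lia.
have b2 : 16 * H <= H * H by apply: leq_mul.
have hxh : x + h <= P.
  have : Q * (x + h) <= Q * P by rewrite [Q * P]mulnC PQ; lia.
  by rewrite leq_pmul2l.
have lP : l * P <= Q * P - P.
  have : l * P <= (Q.-1) * P by apply: leq_mul; lia.
  by rewrite -subn1 mulnBl mul1n.
have Pl : P <= l * P by rewrite leq_pmull.
have e1 : x * P = h * (4 * (H * H)) + l * P.
  by rewrite {1}ex mulnDl -mulnA [Q * P]mulnC PQ.
apply: (mid _ _ _ h (l * P - h)); lia.
Qed.

Lemma mid2 x P n a : a * n <= x * P -> x * P - a * n < n -> x <= x * P - a * n ->
  x * P - a * n + x <= n -> x <= x * P %% n /\ x * P %% n + x <= n.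
Proof. move=> h0; apply: (mid _ _ _ a (x * P - a * n)); lia. Qed.

Lemma eH_facts t H : H = 2 ^ (2 * t) ->
  [/\ 2 ^ (2 * t + 1) = 2 * H, 2 ^ (2 * t + 2) = 4 * H & 2 ^ (4 * t + 2) = 4 * (H * H)].
Proof.
move=> ->; split.
- by rewrite expnD expn1 mulnC.
- by rewrite expnD mulnC.
- rewrite (_ : 4 * t + 2 = 2 + (2 * t + 2 * t)); last lia.
  by rewrite !expnD.
Qed.

Lemma leader_of t H x : H = 2 ^ (2 * t) -> 2 <= t -> odd x -> 1 <= x <= 6 * H ->
  (x <= x * H %% (4 * (H * H) + 1) /\ x * H %% (4 * (H * H) + 1) + x <= 4 * (H * H) + 1) ->
  (x <= x * (2 * H) %% (4 * (H * H) + 1) /\ x * (2 * H) %% (4 * (H * H) + 1) + x <= 4 * (H * H) + 1) ->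
  (x <= x * (4 * H) %% (4 * (H * H) + 1) /\ x * (4 * H) %% (4 * (H * H) + 1) + x <= 4 * (H * H) + 1) ->
  coset_leader (4 * (H * H) + 1) x.
Proof.
move=> eH t2 ox hx b1 b2 b4.
have [e1 e2 e3] := eH_facts _ _ eH.
have H16 : 16 <= H by rewrite eH (_ : 16 = 2 ^ 4) // leq_exp2l //; lia.
have b5 : 16 * H <= H * H by apply: leq_mul.
rewrite -e3; apply: leader_crit.
- lia.
- case/andP: hx => //.
- rewrite e3; case/andP: hx => _ hx; lia.
move=> j hj; rewrite e3.
case: (ltnP j (2 * t)) => j1; first exact: (small_case _ _ _ _ eH H16 j1 hx).
case: (ltnP (2 * t + 2) j) => j2.
  by apply: (big_case _ _ _ _ eH H16 _ ox hx); lia.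
have : j = 2 * t \/ j = 2 * t + 1 \/ j = 2 * t + 2 by lia.
by case=> [->|[->|->]]; rewrite -?eH ?e1 ?e2.
Qed.

Lemma nl_low n x P j a : 2 ^ j = P -> a * n <= x * P -> x * P - a * n < n ->
  x * P - a * n < x -> ~ coset_leader n x.
Proof.
move=> eP h0 h1 h2; apply: (not_leader _ _ j); rewrite eP.
by rewrite (modE _ a _ (x * P - a * n)) //; lia.
Qed.

Lemma nl_high t H x P j a : H = 2 ^ (2 * t) -> 2 ^ j = P ->
  a * (4 * (H * H) + 1) <= x * P -> 0 < x * P - a * (4 * (H * H) + 1) ->
  x * P - a * (4 * (H * H) + 1) < 4 * (H * H) + 1 ->
  4 * (H * H) + 1 - (x * P - a * (4 * (H * H) + 1)) < x ->
  ~ coset_leader (4 * (H * H) + 1) x.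
Proof.
move=> eH eP h0 h1 h2 h3.
have [_ _ e3] := eH_facts _ _ eH.
apply: (not_leader _ _ (j + (4 * t + 2))).
rewrite -e3 shiftm e3 eP (modE _ a _ (x * P - a * (4 * (H * H) + 1))) //; lia.
Qed.

Lemma p1 H x : 16 <= H -> 1 <= x <= 2 * H - 1 -> x <> H ->
  (x <= x * H %% (4 * (H * H) + 1) /\ x * H %% (4 * (H * H) + 1) + x <= 4 * (H * H) + 1) /\
  (x <= x * (2 * H) %% (4 * (H * H) + 1) /\ x * (2 * H) %% (4 * (H * H) + 1) + x <= 4 * (H * H) + 1) /\
  (x <= x * (4 * H) %% (4 * (H * H) + 1) /\ x * (4 * H) %% (4 * (H * H) + 1) + x <= 4 * (H * H) + 1).
Proof.
move=> H16 hx hxH'; split; [|split].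
- apply: (mid2 _ _ _ 0); nia.
- apply: (mid2 _ _ _ 0); nia.
- case: (ltnP H x) => hxH; [apply: (mid2 _ _ _ 1) | apply: (mid2 _ _ _ 0)]; nia.
Qed.

Lemma p2 H x : 16 <= H -> 2 * H + 3 <= x <= 4 * H - 5 -> x <> 3 * H ->
  (x <= x * H %% (4 * (H * H) + 1) /\ x * H %% (4 * (H * H) + 1) + x <= 4 * (H * H) + 1) /\
  (x <= x * (2 * H) %% (4 * (H * H) + 1) /\ x * (2 * H) %% (4 * (H * H) + 1) + x <= 4 * (H * H) + 1) /\
  (x <= x * (4 * H) %% (4 * (H * H) + 1) /\ x * (4 * H) %% (4 * (H * H) + 1) + x <= 4 * (H * H) + 1).
Proof.
move=> H16 hx hxH'; split; [|split].
- apply: (mid2 _ _ _ 0); nia.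
- apply: (mid2 _ _ _ 1); nia.
- case: (ltnP (3 * H) x) => hxH; [apply: (mid2 _ _ _ 3) | apply: (mid2 _ _ _ 2)]; nia.
Qed.

Lemma p3 H x : 16 <= H -> 4 * H + 5 <= x <= 5 * H - 3 ->
  (x <= x * H %% (4 * (H * H) + 1) /\ x * H %% (4 * (H * H) + 1) + x <= 4 * (H * H) + 1) /\
  (x <= x * (2 * H) %% (4 * (H * H) + 1) /\ x * (2 * H) %% (4 * (H * H) + 1) + x <= 4 * (H * H) + 1) /\
  (x <= x * (4 * H) %% (4 * (H * H) + 1) /\ x * (4 * H) %% (4 * (H * H) + 1) + x <= 4 * (H * H) + 1).
Proof.
move=> H16 hx; split; [|split].
- apply: (mid2 _ _ _ 1); nia.
- apply: (mid2 _ _ _ 2); nia.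
- apply: (mid2 _ _ _ 4); nia.
Qed.

Lemma p4 H x : 16 <= H -> 5 * H + 3 <= x <= 6 * H - 3 ->
  (x <= x * H %% (4 * (H * H) + 1) /\ x * H %% (4 * (H * H) + 1) + x <= 4 * (H * H) + 1) /\
  (x <= x * (2 * H) %% (4 * (H * H) + 1) /\ x * (2 * H) %% (4 * (H * H) + 1) + x <= 4 * (H * H) + 1) /\
  (x <= x * (4 * H) %% (4 * (H * H) + 1) /\ x * (4 * H) %% (4 * (H * H) + 1) + x <= 4 * (H * H) + 1).
Proof.
move=> H16 hx; split; [|split].
- apply: (mid2 _ _ _ 1); nia.
- apply: (mid2 _ _ _ 2); nia.
- apply: (mid2 _ _ _ 5); nia.
Qed.

Theorem theorem4p1 (t : nat) (ht : 2 <= t) :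
  let m := 4 * t + 2 in
  let n := 2 ^ m + 1 in
  forall x : nat, odd x ->
  [/\ (1 <= x <= 2 ^ (2 * t + 1) - 1 -> coset_leader n x),
      (2 ^ (2 * t + 1) + 3 <= x <= 2 ^ (2 * t + 2) - 5 -> coset_leader n x),
      (2 ^ (2 * t + 2) + 5 <= x <= 2 ^ (2 * t + 2) + 2 ^ (2 * t) - 3 ->
         coset_leader n x),
      (2 ^ (2 * t + 2) + 2 ^ (2 * t) + 3 <= x <= 2 ^ (2 * t + 2) + 2 ^ (2 * t + 1) - 3 ->
         coset_leader n x)
    & ((x = 2 ^ (2 * t + 1) + 1) \/
       (2 ^ (2 * t + 2) - 3 <= x <= 2 ^ (2 * t + 2) + 3) \/
       (2 ^ (2 * t + 2) + 2 ^ (2 * t) - 1 <= x <= 2 ^ (2 * t + 2) + 2 ^ (2 * t) + 1) \/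
       (2 ^ (2 * t + 2) + 2 ^ (2 * t + 1) - 1 <= x <= 2 ^ (2 * t + 2) + 2 ^ (2 * t + 1) + 3) ->
       ~ coset_leader n x)].
Proof.
move=> m n x ox.
have [e1 e2 e3] := eH_facts t _ (erefl (2 ^ (2 * t))).
have en : n = 4 * (2 ^ (2 * t) * 2 ^ (2 * t)) + 1 by rewrite /n /m e3.
rewrite en e1 e2 {en n m e1 e2}.
set H := 2 ^ (2 * t) in e3 *.
have eH : H = 2 ^ (2 * t) by [].
have H16 : 16 <= H by rewrite eH (_ : 16 = 2 ^ 4) // leq_exp2l //; lia.
have oH : ~~ odd H by rewrite eH oddX; apply/norP; split; [lia|].
have [G eG] : exists G, H = G * 2.
  by exists H./2; rewrite -[LHS]odd_double_half (negbTE oH) add0n -muln2.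
have [y ey] : exists y, x = y * 2 + 1.
  by exists x./2; rewrite -[LHS]odd_double_half ox -muln2 addnC.
have P1 : 2 ^ (2 * t) = H by [].
have P2 : 2 ^ (2 * t + 1) = 2 * H by rewrite expnD expn1 mulnC.
have P4 : 2 ^ (2 * t + 2) = 4 * H by rewrite expnD mulnC.
clear e3.
split.
- move=> hx; have r : 1 <= x <= 6 * H by lia.
  have [b1 [b2 b4]] := p1 H x H16 hx ltac:(lia).
  exact: (leader_of t H x eH ht ox r).
- move=> hx; have r : 1 <= x <= 6 * H by lia.
  have [b1 [b2 b4]] := p2 H x H16 ltac:(lia) ltac:(lia).
  exact: (leader_of t H x eH ht ox r).
- move=> hx; have r : 1 <= x <= 6 * H by lia.
  have [b1 [b2 b4]] := p3 H x H16 ltac:(lia).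
  exact: (leader_of t H x eH ht ox r).
- move=> hx; have r : 1 <= x <= 6 * H by lia.
  have [b1 [b2 b4]] := p4 H x H16 ltac:(lia).
  exact: (leader_of t H x eH ht ox r).
move=> hx.
clear ox oH.
case: hx => [->|[hx|[hx|hx]]].
- apply: (nl_low _ _ _ _ 1 P2); nia.
- have : x = 4 * H - 3 \/ x = 4 * H - 1 \/ x = 4 * H + 1 \/ x = 4 * H + 3 by lia.
  clear hx y ey; case=> [->|[->|[->|->]]].
  + apply: (nl_high t H _ _ _ 0 eH P1); nia.
  + apply: (nl_high t H _ _ _ 0 eH P1); nia.
  + apply: (nl_low _ _ _ _ 1 P1); nia.
  + apply: (nl_low _ _ _ _ 1 P1); nia.
- have : x = 5 * H - 1 \/ x = 5 * H + 1 by lia.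
  clear hx y ey; case=> [->|->].
  + apply: (nl_high t H _ _ _ 4 eH P4); nia.
  + apply: (nl_low _ _ _ _ 5 P4); nia.
- have : x = 6 * H - 1 \/ x = 6 * H + 1 \/ x = 6 * H + 3 by lia.
  clear hx y ey; case=> [->|[->|->]].
  + apply: (nl_high t H _ _ _ 5 eH P4); nia.
  + apply: (nl_low _ _ _ _ 6 P4); nia.
  + apply: (nl_low _ _ _ _ 3 P2); nia.
Qed.
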